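(* For every integer $N\ge 0$, let $T_{2\times 3}(9,N)$ be the number of tilings of a $9\times n$ rectangle, $n=2N/3$, by $N$ tiles of size $2\times 3$ (and $0$ if $2N/3\notin\mathbb{Z}$). Then, as formal power series, \[ \sum_{N\ge 0} T_{2\times 3}(9,N)\,z^N=\frac{1-z^3}{1-2z^3+z^6-4z^9+2z^{12}}. \]
   Context: A tiling of an $m\times n$ rectangle (width $m$, length $n$, made of $mn$ unit squares) by $a\times b$ tiles is a partition of the rectangle into non-overlapping axis-parallel $a\times b$ rectangles with integer corner coordinates, each placed in either of its two orientations. Tilings related by reflections or rotations of the rectangle are counted as distinct. The empty tiling counts once for $N=0$. *)

(* Defs.v *)
From mathcomp Require Import all_boot all_order all_algebra.
Set Implicit Arguments. Unset Strict Implicit. Unset Printing Implicit Defensive.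
Import GRing.Theory Num.Theory.

(* A placed tile in an m x n rectangle: (x, y, w, h) = lower-left corner (x,y)
   and dimensions w (along the width m) and h (along the length n). *)
Definition tile (m n : nat) : finType :=
  ('I_m.+1 * 'I_n.+1 * 'I_m.+1 * 'I_n.+1)%type.

Definition tx m n (t : tile m n) : nat := t.1.1.1.
Definition ty m n (t : tile m n) : nat := t.1.1.2.
Definition tw m n (t : tile m n) : nat := t.1.2.
Definition th m n (t : tile m n) : nat := t.2.

Definition good_tile (m n a b : nat) (t : tile m n) : bool :=
  [&& ((tw t == a) && (th t == b)) || ((tw t == b) && (th t == a)),
      tx t + tw t <= m & ty t + th t <= n].

Definition covers m n (t : tile m n) (i j : nat) : bool :=
  [&& tx t <= i < tx t + tw t & ty t <= j < ty t + th t].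

Definition is_tiling (m n a b : nat) (S : {set tile m n}) : bool :=
  [forall t in S, good_tile a b t] &&
  [forall i : 'I_m, forall j : 'I_n, #|[set t in S | covers t i j]| == 1].

Definition ntilings (m n a b N : nat) : nat :=
  #|[set S : {set tile m n} | is_tiling a b S && (#|S| == N)]|.

Definition T23_9 (N : nat) : nat :=
  if 3 %| 2 * N then ntilings 9 (2 * N %/ 3) 2 3 N else 0.

(* Main.v *)
Require Import Defs.
From mathcomp Require Import all_boot all_order all_algebra.
From mathcomp Require Import zify ring lra.
Import GRing.Theory Num.Theory.
Local Open Scope ring_scope.

Definition table : seq (seq nat * seq int) := [::
  ([:: 0; 0; 0; 0; 0; 0; 0; 0; 0], [:: Posz 1; Posz 0; Negz 0]);
  ([:: 0; 0; 0; 0; 0; 0; 0; 3; 3], [:: Posz 0; Posz 0; Posz 0; Posz 0; Posz 0; Posz 0; Posz 3; Posz 0; Negz 1]);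
  ([:: 0; 0; 0; 0; 0; 3; 3; 3; 3], [:: Posz 0; Posz 0; Posz 0; Posz 0; Posz 0; Posz 0; Posz 2; Posz 0; Negz 0]);
  ([:: 0; 0; 0; 3; 3; 3; 3; 3; 3], [:: Posz 0; Posz 0; Posz 0; Posz 0; Posz 0; Posz 0; Posz 1]);
  ([:: 0; 3; 3; 3; 3; 3; 3; 3; 3], [:: ]);
  ([:: 2; 2; 2; 3; 3; 3; 3; 3; 3], [:: Posz 0; Posz 0; Posz 0; Posz 0; Posz 0; Posz 0; Posz 1]);
  ([:: 1; 1; 1; 2; 2; 2; 2; 2; 2], [:: Posz 0; Posz 0; Posz 0; Posz 0; Posz 0; Posz 1]);
  ([:: 0; 0; 0; 1; 1; 1; 1; 1; 1], [:: Posz 0; Posz 0; Posz 0; Posz 0; Posz 1]);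
  ([:: 0; 3; 3; 1; 1; 1; 1; 1; 1], [:: ]);
  ([:: 2; 2; 2; 1; 1; 1; 1; 1; 1], [:: Posz 0; Posz 0; Posz 0; Posz 0; Posz 1]);
  ([:: 1; 1; 1; 0; 0; 0; 0; 0; 0], [:: Posz 0; Posz 0; Posz 0; Posz 1]);
  ([:: 1; 1; 1; 0; 0; 0; 0; 3; 3], [:: Posz 0; Posz 0; Posz 0; Posz 1; Posz 0; Negz 0]);
  ([:: 1; 1; 1; 0; 0; 3; 3; 3; 3], [:: Posz 0; Posz 0; Posz 0; Posz 1; Posz 0; Negz 0]);
  ([:: 1; 1; 1; 3; 3; 3; 3; 3; 3], [:: Posz 0; Posz 0; Posz 0; Posz 1; Posz 0; Negz 0]);
  ([:: 0; 0; 0; 2; 2; 2; 2; 2; 2], [:: Posz 0; Posz 0; Posz 1; Posz 0; Negz 0]);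
  ([:: 0; 3; 3; 2; 2; 2; 2; 2; 2], [:: ]);
  ([:: 2; 2; 2; 2; 2; 2; 2; 2; 2], [:: Posz 0; Posz 0; Posz 1; Posz 0; Negz 0]);
  ([:: 1; 1; 1; 1; 1; 1; 1; 1; 1], [:: Posz 0; Posz 1; Posz 0; Negz 0]);
  ([:: 1; 1; 1; 0; 2; 2; 2; 3; 3], [:: ]);
  ([:: 1; 1; 1; 0; 0; 0; 2; 2; 2], [:: Posz 0; Posz 0; Posz 0; Posz 0; Posz 0; Posz 1]);
  ([:: 1; 1; 1; 0; 3; 3; 2; 2; 2], [:: ]);
  ([:: 0; 0; 2; 2; 2; 3; 3; 3; 3], [:: Posz 0; Posz 0; Posz 0; Posz 0; Posz 0; Posz 0; Posz 1; Posz 0; Negz 0]);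
  ([:: 3; 3; 2; 2; 2; 3; 3; 3; 3], [:: Posz 0; Posz 0; Posz 0; Posz 0; Posz 0; Posz 0; Posz 1; Posz 0; Negz 0]);
  ([:: 2; 2; 1; 1; 1; 2; 2; 2; 2], [:: Posz 0; Posz 0; Posz 0; Posz 0; Posz 0; Posz 1; Posz 0; Negz 0]);
  ([:: 1; 1; 0; 0; 0; 1; 1; 1; 1], [:: Posz 0; Posz 0; Posz 0; Posz 0; Posz 1; Posz 0; Negz 0]);
  ([:: 1; 1; 0; 3; 3; 1; 1; 1; 1], [:: ]);
  ([:: 1; 1; 2; 2; 2; 1; 1; 1; 1], [:: Posz 0; Posz 0; Posz 0; Posz 0; Posz 1; Posz 0; Negz 0]);
  ([:: 0; 0; 1; 1; 1; 0; 0; 0; 0], [:: Posz 0; Posz 0; Posz 0; Posz 1; Posz 0; Negz 0]);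
  ([:: 0; 0; 1; 1; 1; 0; 0; 3; 3], [:: Posz 0; Posz 0; Posz 0; Posz 1; Posz 0; Negz 0]);
  ([:: 0; 0; 1; 1; 1; 3; 3; 3; 3], [:: Posz 0; Posz 0; Posz 0; Posz 1; Posz 0; Negz 0]);
  ([:: 3; 3; 1; 1; 1; 3; 3; 3; 3], [:: Posz 0; Posz 0; Posz 0; Posz 1; Posz 0; Negz 0]);
  ([:: 2; 2; 0; 0; 0; 2; 2; 2; 2], [:: Posz 0; Posz 0; Posz 1; Posz 0; Negz 0]);
  ([:: 2; 2; 0; 3; 3; 2; 2; 2; 2], [:: ]);
  ([:: 0; 0; 1; 1; 1; 0; 2; 2; 2], [:: ]);
  ([:: 0; 0; 0; 0; 2; 2; 2; 3; 3], [:: Posz 0; Posz 0; Posz 0; Posz 0; Posz 0; Posz 0; Posz 1; Posz 0; Negz 0]);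
  ([:: 0; 0; 3; 3; 2; 2; 2; 3; 3], [:: Posz 0; Posz 0; Posz 0; Posz 0; Posz 0; Posz 0; Posz 1; Posz 0; Negz 0]);
  ([:: 3; 3; 3; 3; 2; 2; 2; 3; 3], [:: Posz 0; Posz 0; Posz 0; Posz 0; Posz 0; Posz 0; Posz 1; Posz 0; Negz 0]);
  ([:: 2; 2; 2; 2; 1; 1; 1; 2; 2], [:: Posz 0; Posz 0; Posz 0; Posz 0; Posz 0; Posz 1; Posz 0; Negz 0]);
  ([:: 1; 1; 1; 1; 0; 0; 0; 1; 1], [:: Posz 0; Posz 0; Posz 0; Posz 0; Posz 1; Posz 0; Negz 0]);
  ([:: 1; 1; 1; 1; 0; 3; 3; 1; 1], [:: ]);
  ([:: 1; 1; 1; 1; 2; 2; 2; 1; 1], [:: Posz 0; Posz 0; Posz 0; Posz 0; Posz 1; Posz 0; Negz 0]);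
  ([:: 0; 0; 0; 0; 1; 1; 1; 0; 0], [:: Posz 0; Posz 0; Posz 0; Posz 1; Posz 0; Negz 0]);
  ([:: 0; 0; 0; 0; 1; 1; 1; 3; 3], [:: Posz 0; Posz 0; Posz 0; Posz 1; Posz 0; Negz 0]);
  ([:: 0; 0; 3; 3; 1; 1; 1; 3; 3], [:: Posz 0; Posz 0; Posz 0; Posz 1; Posz 0; Negz 0]);
  ([:: 3; 3; 3; 3; 1; 1; 1; 3; 3], [:: Posz 0; Posz 0; Posz 0; Posz 1; Posz 0; Negz 0]);
  ([:: 2; 2; 2; 2; 0; 0; 0; 2; 2], [:: Posz 0; Posz 0; Posz 1; Posz 0; Negz 0]);
  ([:: 2; 2; 2; 2; 0; 3; 3; 2; 2], [:: ]);
  ([:: 0; 2; 2; 2; 1; 1; 1; 3; 3], [:: ]);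
  ([:: 0; 2; 2; 2; 2; 2; 2; 3; 3], [:: ]);
  ([:: 0; 0; 0; 0; 0; 0; 2; 2; 2], [:: Posz 0; Posz 0; Posz 1; Posz 0; Negz 0; Posz 0; Posz 1]);
  ([:: 0; 0; 0; 0; 3; 3; 2; 2; 2], [:: Posz 0; Posz 0; Posz 0; Posz 0; Posz 0; Posz 0; Posz 1]);
  ([:: 0; 0; 3; 3; 3; 3; 2; 2; 2], [:: Posz 0; Posz 0; Posz 0; Posz 0; Posz 0; Posz 0; Posz 1]);
  ([:: 3; 3; 3; 3; 3; 3; 2; 2; 2], [:: Posz 0; Posz 0; Posz 0; Posz 0; Posz 0; Posz 0; Posz 1]);
  ([:: 2; 2; 2; 2; 2; 2; 1; 1; 1], [:: Posz 0; Posz 0; Posz 0; Posz 0; Posz 0; Posz 1]);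
  ([:: 1; 1; 1; 1; 1; 1; 0; 0; 0], [:: Posz 0; Posz 0; Posz 0; Posz 0; Posz 1]);
  ([:: 1; 1; 1; 1; 1; 1; 0; 3; 3], [:: ]);
  ([:: 1; 1; 1; 1; 1; 1; 2; 2; 2], [:: Posz 0; Posz 0; Posz 0; Posz 0; Posz 1]);
  ([:: 0; 0; 0; 0; 0; 0; 1; 1; 1], [:: Posz 0; Posz 0; Posz 0; Posz 1]);
  ([:: 0; 0; 0; 0; 3; 3; 1; 1; 1], [:: Posz 0; Posz 0; Posz 0; Posz 1; Posz 0; Negz 0]);
  ([:: 0; 0; 3; 3; 3; 3; 1; 1; 1], [:: Posz 0; Posz 0; Posz 0; Posz 1; Posz 0; Negz 0]);
  ([:: 3; 3; 3; 3; 3; 3; 1; 1; 1], [:: Posz 0; Posz 0; Posz 0; Posz 1; Posz 0; Negz 0]);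
  ([:: 2; 2; 2; 2; 2; 2; 0; 0; 0], [:: Posz 0; Posz 0; Posz 1; Posz 0; Negz 0]);
  ([:: 2; 2; 2; 2; 2; 2; 0; 3; 3], [:: ]);
  ([:: 0; 2; 2; 2; 3; 3; 1; 1; 1], [:: ]);
  ([:: 0; 0; 0; 2; 2; 2; 1; 1; 1], [:: Posz 0; Posz 0; Posz 0; Posz 0; Posz 0; Posz 1]);
  ([:: 0; 3; 3; 2; 2; 2; 1; 1; 1], [:: ]);
  ([:: 0; 2; 2; 2; 3; 3; 2; 2; 2], [:: ])
]%SEQ.

Definition states : seq (seq nat) := map fst table.
Fixpoint lookup (l : seq (seq nat * seq int)) (t : seq nat) : seq int :=
  match l with [::] => [::] | (s, c) :: l' => if s == t then c else lookup l' t end.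
Definition cert t := lookup table t.

Fixpoint a (n : nat) : int :=
  match n with
  | 0 => 1
  | 1 => 0
  | m.+2 => 2 * a m + match m with
                      | m1.+2 => - a m1 + match m1 with
                                          | m2.+2 => 4 * a m2 + match m2 with
                                                                | m3.+2 => - (2 * a m3)
                                                                | _ => 0 end
                                          | _ => 0 end
                      | _ => 0 end
  end.

Fixpoint E (c : seq int) (k : nat) : int :=
  match c with
  | [::] => 0
  | c0 :: c' => c0 * a k + (if k is k'.+1 then E c' k' else 0)
  end.

Fixpoint padd (p q : seq int) : seq int :=
  match p, q with
  | [::], _ => q
  | _, [::] => p
  | x :: p', y :: q' => (x + y) :: padd p' q'
  end.

Definition polyeq (p q : seq int) : bool :=
  all (fun i => nth 0 p i == nth 0 q i) (iota 0 (maxn (size p) (size q))).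

Definition qq9 : seq int := [:: 1; 0; -2; 0; 1; 0; -4; 0; 2].
Definition zeros : seq nat := nseq 9 0%N.
Definition lastz (t : seq nat) : nat :=
  foldl (fun acc i => if nth 0%N t i == 0%N then i else acc) 0%N (iota 0 9).
Definition ow (o : bool) : nat := if o then 2%N else 3%N.
Definition oh (o : bool) : nat := if o then 3%N else 2%N.
Definition fitc (t : seq nat) (x : nat) (o : bool) : bool :=
  (ow o <= x.+1)%N && all (fun j => nth 0%N t j == 0%N) (iota (x.+1 - ow o) (ow o)).
Definition place (t : seq nat) (x : nat) (o : bool) : seq nat :=
  mkseq (fun i => if (x.+1 - ow o <= i)%N && (i <= x)%N then oh o else nth 0%N t i) 9.
Definition allpos (t : seq nat) : bool := all (fun v => 0 < v)%N t.
Definition ct t x o := if fitc t x o then cert (place t x o) else [::].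

Definition ok_state (t : seq nat) : bool :=
  (size t == 9%N) && (sumn t <= 27)%N &&
  if allpos t then
    [&& map predn t \in states, sumn (map predn t) + 9 == sumn t :> nat &
        polyeq (cert t) (0 :: cert (map predn t))]
  else let x := lastz t in
    [&& (x < 9)%N, nth 0%N t x == 0%N, all (fun i => nth 0%N t i != 0%N) (iota x.+1 (8 - x)),
     polyeq (cert t) (padd (if t == zeros then qq9 else [::]) (padd (ct t x false) (ct t x true))) &
     all (fun o => fitc t x o ==> [&& place t x o \in states, sumn (place t x o) == sumn t + 6 :> nat,
            (1 < oh o)%N ==> (E (cert (place t x o)) 1 == 0) &
            (2 < oh o)%N ==> (E (cert (place t x o)) 2 == 0)]) [:: false; true]].

Lemma all_ok : all ok_state states.
Proof. vm_compute. reflexivity. Qed.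
Lemma zeros_in : zeros \in states. Proof. by vm_compute. Qed.
Lemma cert_zeros : cert zeros = [:: 1; 0; -1]. Proof. by vm_compute. Qed.
Global Opaque cert.

Lemma E_nil k : E [::] k = 0. Proof. by []. Qed.

Lemma E_padd p q k : E (padd p q) k = E p k + E q k.
Proof.
elim: p q k => [|x p IH] q k; first by rewrite E_nil add0r.
case: q => [|y q]; first by rewrite /= addr0.
case: k => [|k] /=; first by rewrite !addr0 mulrDl.
by rewrite IH mulrDl; ring.
Qed.

Lemma E_zero p k : (forall i, nth 0 p i = 0) -> E p k = 0.
Proof.
elim: p k => [|x p IH] k //= H.
have := H 0%N => /= ->; rewrite mul0r add0r.
case: k => [|k] //; apply: IH => i; exact: (H i.+1).
Qed.

Lemma E_nth p q k : (forall i, nth 0 p i = nth 0 q i) -> E p k = E q k.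
Proof.
elim: p q k => [|x p IH] q k H.
  by rewrite E_nil E_zero // => i; rewrite -H nth_nil.
case: q H => [|y q] H.
  by rewrite E_zero // => i; rewrite H nth_nil.
have := H 0%N => /= ->.
case: k => [|k] //; congr (_ + _); apply: IH => i; exact: (H i.+1).
Qed.

Lemma polyeqP p q : polyeq p q -> forall i, nth 0 p i = nth 0 q i.
Proof.
move=> /allP H i.
case: (ltnP i (maxn (size p) (size q))) => Hi.
  by apply/eqP; apply: H; rewrite mem_iota.
rewrite geq_max in Hi; case/andP: Hi => H1 H2.
by rewrite !nth_default.
Qed.

Lemma E_polyeq p q k : polyeq p q -> E p k = E q k.
Proof. by move=> H; apply: E_nth; apply: polyeqP. Qed.

Lemma E_shift c k : E (0 :: c) k.+1 = E c k.
Proof. by rewrite /= mul0r add0r. Qed.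

Lemma aS k : a k.+4.+4 = 2 * a k.+4.+2 - a k.+4 + 4 * a k.+2 - 2 * a k.
Proof. by rewrite /= !addrA. Qed.

Arguments a : simpl never.

Lemma E_q k : E qq9 k.+1 = 0.
Proof.
do 7 (case: k => [|k]; first by vm_compute).
rewrite /qq9 /= aS.
case: k => [|k]; ring.
Qed.

Local Close Scope ring_scope.
Set Implicit Arguments. Unset Strict Implicit. Unset Printing Implicit Defensive.

Definition inR (t : seq nat) (k i j : nat) : bool := j + nth 0 t i < k.
Definition cnt n (S : {set tile 9 n}) (i j : nat) : nat := #|[set u in S | covers u i j]|.
Definition isTil n (t : seq nat) (k : nat) (S : {set tile 9 n}) : bool :=
  [forall u in S, good_tile 2 3 u] && [forall i : 'I_9, forall j : 'I_n, cnt S i j == inR t k i j].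
Definition F n t k N := #|[set S : {set tile 9 n} | isTil t k S && (#|S| == N)]|.

Lemma cnt_sum n (S : {set tile 9 n}) i j : cnt S i j = \sum_(u in S) covers u i j.
Proof.
rewrite /cnt -sum1_card [LHS]big_mkcond [RHS]big_mkcond; apply: eq_bigr => u _.
by rewrite inE; case: (u \in S); case: covers.
Qed.

Lemma cnt_U1 n (S : {set tile 9 n}) u i j : u \notin S -> cnt (u |: S) i j = covers u i j + cnt S i j.
Proof. by move=> H; rewrite !cnt_sum big_setU1. Qed.

Lemma cnt_D1 n (S : {set tile 9 n}) u i j : u \in S -> cnt S i j = covers u i j + cnt (S :\ u) i j.
Proof. by move=> H; rewrite !cnt_sum (big_setD1 _ H). Qed.

Definition tau n (x k : nat) (o : bool) : tile 9 n :=
  (inord (x.+1 - ow o), inord (k - oh o), inord (ow o), inord (oh o)).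

Lemma tau_vals n x k o : x < 9 -> ow o <= x.+1 -> oh o <= k -> k <= n ->
  [/\ tx (tau n x k o) = x.+1 - ow o, ty (tau n x k o) = k - oh o,
      tw (tau n x k o) = ow o & th (tau n x k o) = oh o].
Proof.
move=> Hx Hw Hh Hk; rewrite /tx /ty /tw /th /tau /= !inordK //; lia.
Qed.

Lemma covers_tau n x k o i j : x < 9 -> ow o <= x.+1 -> oh o <= k -> k <= n ->
  covers (tau n x k o) i j = (x.+1 - ow o <= i <= x) && (k - oh o <= j < k).
Proof.
move=> Hx Hw Hh Hk; rewrite /covers; case: (tau_vals Hx Hw Hh Hk) => -> -> -> ->.
rewrite subnK // subnK //.
Qed.

Lemma good_tau n x k o : x < 9 -> ow o <= x.+1 -> oh o <= k -> k <= n -> good_tile 2 3 (tau n x k o).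
Proof.
move=> Hx Hw Hh Hk; rewrite /good_tile; case: (tau_vals Hx Hw Hh Hk) => -> -> -> ->.
rewrite subnK // subnK //; apply/and3P; split; try lia.
by case: o {Hw Hh}.
Qed.

Lemma nth_place t x o i : i < 9 ->
  nth 0 (place t x o) i = if (x.+1 - ow o <= i) && (i <= x) then oh o else nth 0 t i.
Proof. by move=> Hi; rewrite /place nth_mkseq. Qed.

Lemma fitc_zero t x o i : fitc t x o -> x.+1 - ow o <= i <= x -> nth 0 t i = 0.
Proof.
case/andP=> Hw /allP H Hi; apply/eqP; apply: H.
rewrite mem_iota; lia.
Qed.

Lemma inR_split n t k x o i j : x < 9 -> i < 9 -> fitc t x o -> oh o <= k -> k <= n ->
  (inR t k i j : nat) = inR (place t x o) k i j + covers (tau n x k o) i j.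
Proof.
move=> Hx Hi Hf Hh Hk; have Hw : ow o <= x.+1 by case/andP: Hf.
rewrite covers_tau // /inR nth_place //.
case R: ((x.+1 - ow o <= i) && (i <= x)).
  rewrite (fitc_zero Hf R) /= addn0.
  case: (ltnP j k) => H1; case: (ltnP (j + oh o) k) => H2; case: (leqP (k - oh o) j) => H3 //=; lia.
by rewrite /= addn0.
Qed.

Lemma isT_good n t k (S : {set tile 9 n}) u : isTil t k S -> u \in S -> good_tile 2 3 u.
Proof. by case/andP=> /forallP H _ Hu; have /implyP := H u; apply. Qed.

Lemma isT_cnt n t k (S : {set tile 9 n}) i j : isTil t k S -> i < 9 -> j < n -> cnt S i j = inR t k i j.
Proof.
case/andP=> _ /forallP H Hi Hj.
by have := H (Ordinal Hi) => /forallP /(_ (Ordinal Hj)) /eqP.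
Qed.

Lemma isT_inR n t k (S : {set tile 9 n}) u i j :
  isTil t k S -> u \in S -> covers u i j -> i < 9 -> j < n -> inR t k i j.
Proof.
move=> HT Hu Hc Hi Hj; have := isT_cnt HT Hi Hj.
have : 0 < cnt S i j by apply/card_gt0P; exists u; rewrite inE Hu Hc.
by move=> Hpos Heq; move: Hpos; rewrite Heq; case: (inR t k i j).
Qed.

Lemma good_vals n (u : tile 9 n) : good_tile 2 3 u ->
  [/\ (tw u == 2) && (th u == 3) || (tw u == 3) && (th u == 2), tx u + tw u <= 9 & ty u + th u <= n].
Proof. by case/and3P. Qed.

Lemma tile_is_tau n t k (S : {set tile 9 n}) u x :
  isTil t k S -> u \in S -> covers u x k.-1 -> 0 < k -> k <= n -> x < 9 ->
  (forall i, x < i < 9 -> nth 0 t i != 0) ->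
  exists o, [/\ fitc t x o, oh o <= k & u = tau n x k o].
Proof.
move=> HT Hu Hc Hk0 Hkn Hx Hmax.
case: (good_vals (isT_good HT Hu)) => Hwh Hxw Hyh.
have Hwh' : (tw u == 2) && (th u == 3) \/ (tw u == 3) && (th u == 2) by apply/orP.
have Hw2 : 2 <= tw u by case: Hwh' => /andP [/eqP -> _].
have Hh2 : 2 <= th u by case: Hwh' => /andP [_ /eqP ->].
move: Hc; rewrite /covers => /andP [/andP [Hc1 Hc2] /andP [Hc3 Hc4]].
have Htr : inR t k (tx u + tw u).-1 (ty u + th u).-1.
  apply: (isT_inR HT Hu); try lia.
  rewrite /covers; apply/andP; split; apply/andP; split; lia.
move: Htr; rewrite /inR => Htr.
have Hy : ty u + th u = k by lia.
have HX : (tx u + tw u).-1 = x.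
  case: (ltngtP (tx u + tw u).-1 x) => // H; try lia.
  have := Hmax (tx u + tw u).-1; rewrite H /=.
  have -> : (tx u + tw u).-1 < 9 by lia.
  move/(_ isT)/eqP => Hne; exfalso; apply: Hne; lia.
have Hw : ow (tw u == 2) = tw u by case: Hwh' => /andP [/eqP -> _].
have Hh : oh (tw u == 2) = th u by case: Hwh' => /andP [/eqP -> /eqP ->].
exists (tw u == 2); split.
- apply/andP; split; first by rewrite Hw; lia.
  apply/allP => j; rewrite mem_iota Hw => Hj.
  have : inR t k j k.-1.
    apply: (isT_inR HT Hu); try lia.
    rewrite /covers; apply/andP; split; apply/andP; split; lia.
  rewrite /inR => H; apply/eqP; lia.
- rewrite Hh; lia.
- move: Hw Hh Hxw Hyh Hy HX Hw2 Hh2; rewrite /tau /tx /ty /tw /th.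
  case: u {Hu Hc1 Hc2 Hc3 Hc4 Htr Hwh Hwh'} => [[[a b] c] d] /= Hw Hh Hxw Hyh Hy HX Hw2 Hh2.
  rewrite Hw Hh; congr (_, _, _, _); apply: val_inj; rewrite /= inordK; lia.
Qed.

Lemma isT0_eq n t (S : {set tile 9 n}) : isTil t 0 S -> S = set0.
Proof.
move=> HT; apply/eqP; rewrite -subset0; apply/subsetP => u Hu; exfalso.
case: (good_vals (isT_good HT Hu)) => Hwh Hxw Hyh.
have Hw2 : 2 <= tw u by case/orP: Hwh => /andP [/eqP -> _].
have Hh2 : 2 <= th u by case/orP: Hwh => /andP [_ /eqP ->].
have : inR t 0 (tx u) (ty u).
  apply: (isT_inR HT Hu); try lia.
  rewrite /covers; apply/andP; split; apply/andP; split; lia.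
by rewrite /inR.
Qed.

Lemma isT_set0 n t : isTil t 0 (set0 : {set tile 9 n}).
Proof.
apply/andP; split; first by apply/forallP => u; rewrite inE.
apply/forallP => i; apply/forallP => j; rewrite cnt_sum big_set0 /inR.
by rewrite ltn0.
Qed.

Lemma F_k0 n t N : F n t 0 N = (N == 0).
Proof.
case: N => [|N].
  rewrite /= -(cards1 (set0 : {set tile 9 n})); apply: eq_card => S; rewrite !inE.
  apply/idP/idP.
    by case/andP => /isT0_eq ->.
  by move/eqP => ->; rewrite isT_set0 cards0.
apply: eq_card0 => S; rewrite inE; apply/negbTE/negP => /andP [/isT0_eq -> ].
by rewrite cards0.
Qed.

Lemma F_N0 n t k x : 0 < k -> k <= n -> x < 9 -> nth 0 t x = 0 -> F n t k 0 = 0.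
Proof.
move=> Hk Hkn Hx Ht; apply: eq_card0 => S; rewrite inE; apply/negbTE/negP => /andP [HT].
rewrite cards_eq0 => /eqP HS.
have := isT_cnt HT Hx (_ : k.-1 < n); rewrite HS cnt_sum big_set0 /inR Ht addn0.
have -> : k.-1 < k by lia.
by move/(_ ltac:(lia)).
Qed.

Lemma tau_notin n t k x o (S : {set tile 9 n}) :
  0 < k -> k <= n -> x < 9 -> fitc t x o -> oh o <= k ->
  isTil (place t x o) k S -> tau n x k o \notin S.
Proof.
move=> Hk Hkn Hx Hf Hh HT; apply/negP => Hu.
have Hw : ow o <= x.+1 by case/andP: Hf.
have Hh2 : 2 <= oh o by rewrite /oh; case: (o).
have Hw2 : 2 <= ow o by rewrite /ow; case: (o).
have Hc : covers (tau n x k o) x k.-1.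
  rewrite covers_tau //; apply/andP; split; apply/andP; split; lia.
have Hkn' : k.-1 < n by lia.
have := isT_inR HT Hu Hc Hx Hkn'.
rewrite /inR nth_place // ifT; last by apply/andP; split; lia.
lia.
Qed.

Lemma isT_add n t k x o (S : {set tile 9 n}) :
  0 < k -> k <= n -> x < 9 -> fitc t x o -> oh o <= k ->
  isTil (place t x o) k S -> isTil t k (tau n x k o |: S).
Proof.
move=> Hk Hkn Hx Hf Hh HT.
have Hw : ow o <= x.+1 by case/andP: Hf.
have Hni := tau_notin Hk Hkn Hx Hf Hh HT.
apply/andP; split.
  apply/forallP => u; apply/implyP; rewrite in_setU1 => /orP [/eqP -> | Hu].
    exact: good_tau.
  exact: (isT_good HT Hu).
apply/forallP => i; apply/forallP => j; apply/eqP.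
rewrite cnt_U1 // (isT_cnt HT (ltn_ord i) (ltn_ord j)).
by rewrite (@inR_split n t k x o i j Hx (ltn_ord i) Hf Hh Hkn) addnC.
Qed.

Lemma isT_rem n t k x o (S : {set tile 9 n}) :
  0 < k -> k <= n -> x < 9 -> fitc t x o -> oh o <= k ->
  isTil t k S -> tau n x k o \in S -> isTil (place t x o) k (S :\ tau n x k o).
Proof.
move=> Hk Hkn Hx Hf Hh HT Hu.
apply/andP; split.
  apply/forallP => u; apply/implyP; rewrite in_setD1 => /andP [_ Hu'].
  exact: (isT_good HT Hu').
apply/forallP => i; apply/forallP => j; apply/eqP.
have := isT_cnt HT (ltn_ord i) (ltn_ord j).
rewrite (cnt_D1 i j Hu) (@inR_split n t k x o i j Hx (ltn_ord i) Hf Hh Hkn).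
lia.
Qed.

Lemma card_A n t k x o N :
  0 < k -> k <= n -> x < 9 ->
  #|[set S : {set tile 9 n} | [&& isTil t k S, #|S| == N.+1, fitc t x o && (oh o <= k)
                               & tau n x k o \in S]]| =
  if fitc t x o && (oh o <= k) then F n (place t x o) k N else 0.
Proof.
move=> Hk Hkn Hx.
case Hfh: (fitc t x o && (oh o <= k)); last first.
  by apply: eq_card0 => S; rewrite inE andFb !andbF.
move/andP: Hfh => [Hf Hh].
set D := [set S : {set tile 9 n} | isTil (place t x o) k S && (#|S| == N)].
have Hinj : {in D &, injective (fun S => tau n x k o |: S)}.
  move=> S1 S2; rewrite !inE => /andP [H1 _] /andP [H2 _] E.
  by rewrite -(setU1K (tau_notin Hk Hkn Hx Hf Hh H1)) E setU1K // (tau_notin Hk Hkn Hx Hf Hh H2).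
rewrite /F -/D -(card_in_imset Hinj); apply: eq_card => S; rewrite inE.
apply/idP/imsetP.
  case/and4P => HT HN _ Hu; exists (S :\ tau n x k o); last by rewrite setD1K.
  rewrite inE isT_rem //=.
  by move: HN; rewrite (cardsD1 (tau n x k o)) Hu add1n eqSS.
case=> S' HS' ->; move: HS'; rewrite inE => /andP [HT HN].
have Hni := tau_notin Hk Hkn Hx Hf Hh HT.
apply/and4P; split.
- exact: isT_add.
- by rewrite cardsU1 Hni add1n eqSS.
- by [].
- by rewrite setU11.
Qed.

Lemma F_step n t k x N : 0 < k -> k <= n -> x < 9 -> nth 0 t x = 0 ->
  (forall i, x < i < 9 -> nth 0 t i != 0) ->
  F n t k N.+1 = (if fitc t x false && (oh false <= k) then F n (place t x false) k N else 0)
               + (if fitc t x true && (oh true <= k) then F n (place t x true) k N else 0).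
Proof.
move=> Hk Hkn Hx Ht Hmax.
rewrite -!card_A //.
set A0 := [set S | _]; set A1 := [set S | _].
have HI : A0 :&: A1 = set0.
  apply/setP => S; rewrite !inE; apply/negbTE/negP.
  case/andP => /and4P [HT _ /andP [Hf0 Hh0] H0] /and4P [_ _ /andP [Hf1 Hh1] H1].
  have Hc : forall o, fitc t x o -> oh o <= k -> covers (tau n x k o) x k.-1.
    move=> o Hf Hh; have Hw : ow o <= x.+1 by case/andP: Hf.
    have Hh2 : 2 <= oh o by rewrite /oh; case: (o).
    have Hw2 : 2 <= ow o by rewrite /ow; case: (o).
    rewrite covers_tau //; apply/andP; split; apply/andP; split; lia.
  have Hne : tau n x k false != tau n x k true.
    apply/negP => /eqP E.
    have Hw0 : ow false <= x.+1 by case/andP: Hf0.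
    have Hw1 : ow true <= x.+1 by case/andP: Hf1.
    case: (tau_vals Hx Hw0 Hh0 Hkn) => _ _ E0 _.
    case: (tau_vals Hx Hw1 Hh1 Hkn) => _ _ E1 _.
    by move: E0; rewrite E E1.
  have : 2 <= cnt S x k.-1.
    apply: (@leq_trans #|[set tau n x k false; tau n x k true]|); first by rewrite cards2 Hne.
    by apply: subset_leq_card; apply/subsetP => u; rewrite !inE => /orP [] /eqP ->;
      rewrite ?H0 ?H1 Hc.
  rewrite (isT_cnt HT Hx (_ : k.-1 < n)); last by lia.
  by case: inR.
rewrite -cardsUI HI cards0 addn0; apply: eq_card => S; rewrite !inE.
apply/idP/idP; last by case/orP => /and4P [-> -> _ _].
case/andP => HT HN.
have : 0 < cnt S x k.-1.
  rewrite (isT_cnt HT Hx (_ : k.-1 < n)); last by lia.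
  by rewrite /inR Ht addn0 (_ : k.-1 < k) //; lia.
case/card_gt0P => u; rewrite inE => /andP [Hu Hcov].
case: (tile_is_tau HT Hu Hcov Hk Hkn Hx Hmax) => o [Hf Hh Eu].
rewrite Eu in Hu; move: Hf Hh Hu; case: o {Eu} => Hf Hh Hu; rewrite HT HN Hf Hh Hu /=; by rewrite ?orbT.
Qed.

Lemma ok_of t : t \in states -> ok_state t.
Proof. by move=> H; have /allP := all_ok; apply. Qed.

Lemma sumn_le t k : (forall i, i < size t -> nth 0 t i <= k) -> sumn t <= size t * k.
Proof.
elim: t => [|y t IH] //= H.
have Hy : y <= k := H 0 isT.
have := IH (fun i Hi => H i.+1 Hi); lia.
Qed.

Lemma sumn_le_at t k x : x < size t -> (forall i, i < size t -> nth 0 t i <= k) ->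
  sumn t + (k - nth 0 t x) <= size t * k.
Proof.
elim: t x => [|y t IH] x //= Hx H.
have Hy : y <= k := H 0 isT.
have Ht : sumn t <= size t * k := sumn_le (fun i Hi => H i.+1 Hi).
case: x Hx => [|x] Hx /=; first lia.
have := IH x Hx (fun i Hi => H i.+1 Hi); lia.
Qed.

Lemma zeros_eq t : size t = 9 -> (forall i, i < 9 -> nth 0 t i <= 0) -> t = zeros.
Proof.
move=> Hs H; apply: (@eq_from_nth _ 0); first by rewrite Hs.
move=> i Hi; rewrite nth_nseq; rewrite Hs in Hi; rewrite Hi; have := H i Hi; lia.
Qed.

Lemma isTil_shift n t k (S : {set tile 9 n}) : size t = 9 -> allpos t ->
  isTil t k.+1 S = isTil (map predn t) k S.
Proof.
move=> Hs Hp; rewrite /isTil; congr (_ && _); apply: eq_forallb => i; apply: eq_forallb => j.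
congr (_ == _); congr nat_of_bool; rewrite /inR (nth_map 0); last by rewrite Hs.
have : 0 < nth 0 t i by apply: (allP Hp); apply: mem_nth; rewrite Hs.
lia.
Qed.

Definition cond (N k : nat) (t : seq nat) : bool := 6 * N == 9 * k - sumn t.

Definition okc t x :=
    [&& (x < 9)%N, nth 0%N t x == 0%N, all (fun i => nth 0%N t i != 0%N) (iota x.+1 (8 - x)),
     polyeq (cert t) (padd (if t == zeros then qq9 else [::]) (padd (ct t x false) (ct t x true))) &
     all (fun o => fitc t x o ==> [&& place t x o \in states, sumn (place t x o) == sumn t + 6 :> nat,
            (1 < oh o)%N ==> (E (cert (place t x o)) 1 == 0%R) &
            (2 < oh o)%N ==> (E (cert (place t x o)) 2 == 0%R)]) [:: false; true]].

Lemma ok_c t : ~~ allpos t -> ok_state t -> okc t (lastz t).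
Proof. by move=> Hn /andP [_]; rewrite (negbTE Hn). Qed.

Lemma ok_s t : ok_state t -> size t = 9 /\ sumn t <= 27.
Proof. by case/andP => /andP [/eqP -> ->]. Qed.

Lemma ok_b t : allpos t -> ok_state t ->
    [&& map predn t \in states, sumn (map predn t) + 9 == sumn t :> nat &
        polyeq (cert t) (0%R :: cert (map predn t))].
Proof. by move=> Hp /andP [_]; rewrite Hp. Qed.

Lemma claim n m : forall k t, 40 * k + (40 - sumn t) <= m -> k <= n -> t \in states ->
  (forall i, i < 9 -> nth 0 t i <= k) ->
  forall N, Posz (F n t k N) = if cond N k t then E (cert t) k else 0%R.
Proof.
elim: m => [|m IH] k t Hm Hkn Ht Hb N.
  have [_ ?] := ok_s (ok_of Ht); lia.
have Hok := ok_of Ht; have [Hs Hs27] := ok_s Hok.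
case: k Hm Hkn Hb => [|k] Hm Hkn Hb.
  have Ez := zeros_eq Hs Hb; subst t.
  rewrite F_k0 /cond; case: N => [|N]; first by vm_compute.
  by [].
case Hap: (allpos t).
  case/and3P: (ok_b Hap Hok) => Hin /eqP Hsum Hpe.
  have EF : F n t k.+1 N = F n (map predn t) k N.
    by rewrite /F; apply: eq_card => S; rewrite !inE isTil_shift.
  have Hb' : forall i, i < 9 -> nth 0 (map predn t) i <= k.
    by move=> i Hi; rewrite (nth_map 0) ?Hs //; have := Hb i Hi; lia.
  have Hle := sumn_le (t := t) (k := k.+1); rewrite Hs in Hle.
  have Hle' := Hle (fun i Hi => Hb i Hi).
  have Hm' : 40 * k + (40 - sumn (map predn t)) <= m by lia.
  have Hkn' : k <= n by lia.
  rewrite EF (IH k (map predn t) Hm' Hkn' Hin Hb').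
  rewrite (E_polyeq _ _ k.+1 Hpe) (E_shift (cert (map predn t)) k) /cond.
  by have -> : 9 * k.+1 - sumn t = 9 * k - sumn (map predn t) by lia.
have := ok_c (negbT Hap) Hok.
set x := lastz t => /and5P [Hx /eqP Hz Hall Hpe Ho].
have Hmax : forall i, x < i < 9 -> nth 0 t i != 0.
  by move=> i Hi; apply: (allP Hall); rewrite mem_iota; lia.
have Hle : sumn t + (k.+1 - nth 0 t x) <= size t * k.+1.
  by apply: sumn_le_at; rewrite Hs // => i Hi; apply: Hb.
rewrite Hs Hz in Hle.
case: N => [|N].
  rewrite (F_N0 _ _ Hx Hz) //.
  rewrite /cond; case: eqP => // H0; exfalso; lia.
have Ho' : forall o, fitc t x o -> [&& place t x o \in states, sumn (place t x o) == sumn t + 6 :> nat,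
            (1 < oh o)%N ==> (E (cert (place t x o)) 1 == 0%R) &
            (2 < oh o)%N ==> (E (cert (place t x o)) 2 == 0%R)].
  by move=> o Hf; move/allP: Ho => /(_ o); rewrite Hf; apply; case: (o).
have Hterm : forall o, Posz (if fitc t x o && (oh o <= k.+1) then F n (place t x o) k.+1 N else 0)
   = if cond N.+1 k.+1 t then E (ct t x o) k.+1 else 0%R.
  move=> o; rewrite /ct; case Hf: (fitc t x o); last by case: (cond _ _ _).
  case/and4P: (Ho' o Hf) => Hpl /eqP Hsp H1 H2.
  have Hh2 : 2 <= oh o by rewrite /oh; case: (o).
  have Hh3 : oh o <= 3 by rewrite /oh; case: (o).
  case: (leqP (oh o) k.+1) => Hh /=.
    have [Hs' Hs27'] := ok_s (ok_of Hpl).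
    have Hbp : forall i, i < 9 -> nth 0 (place t x o) i <= k.+1.
      move=> i Hi; rewrite nth_place //; case: ifP => // _; exact: Hb.
    have Hle2 := sumn_le (t := place t x o) (k := k.+1); rewrite Hs' in Hle2.
    have Hle2' := Hle2 (fun i Hi => Hbp i Hi).
    have Hm' : 40 * k.+1 + (40 - sumn (place t x o)) <= m by lia.
    rewrite (IH k.+1 (place t x o) Hm' Hkn Hpl Hbp) /cond.
    by have -> : (6 * N.+1 == 9 * k.+1 - sumn t) = (6 * N == 9 * k.+1 - sumn (place t x o))
      by apply/eqP/eqP; lia.
  have -> : E (cert (place t x o)) k.+1 = 0%R.
    case: k {Hm Hkn Hb Hle IH} Hh => [|[|k]] Hh.
    - by apply/eqP; move: H1; rewrite (_ : 1 < oh o) //.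
    - by apply/eqP; move: H2; rewrite (_ : 2 < oh o) //.
    - lia.
  by case: (cond _ _ _).
rewrite (@F_step n t k.+1 x N isT Hkn Hx Hz Hmax).
rewrite PoszD !Hterm (E_polyeq _ _ k.+1 Hpe) !E_padd.
rewrite (_ : E (if t == zeros then qq9 else [::]) k.+1 = 0%R); last by case: (t == zeros); [exact: E_q|].
by rewrite GRing.add0r; case: (cond _ _ _); rewrite ?GRing.addr0.
Qed.

Lemma ntil_F n N : ntilings 9 n 2 3 N = F n zeros n N.
Proof.
rewrite /ntilings /F; apply: eq_card => S; rewrite !inE /is_tiling /isTil.
congr (_ && _ && _); apply: eq_forallb => i; apply: eq_forallb => j.
by rewrite /cnt /inR nth_nseq if_same addn0 ltn_ord.
Qed.

Definition e0 (m : nat) : int := E [:: 1; 0; -1]%R (2 * m).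

Lemma T_val N : Posz (T23_9 N) = if 3 %| N then e0 (N %/ 3) else 0%R.
Proof.
rewrite /T23_9 (_ : (3 %| 2 * N) = (3 %| N)); last by apply/idP/idP => H; lia.
case: ifP => // H3.
rewrite ntil_F (@claim (2 * N %/ 3) (80 * (2 * N %/ 3) + 40) (2 * N %/ 3) zeros) //.
- rewrite /cond (_ : 6 * N == 9 * (2 * N %/ 3) - sumn zeros); last by rewrite /= subn0; apply/eqP; lia.
  by rewrite /e0 -cert_zeros (_ : 2 * N %/ 3 = 2 * (N %/ 3)) //; lia.
- by rewrite /= subn0; lia.
- by move=> i Hi; rewrite nth_nseq if_same.
Qed.

Local Open Scope ring_scope.

Lemma sum_pick (f : nat -> int) N c :
  \sum_(k < N.+1) (k == c :> nat)%:R * f k = if (c <= N)%N then f c else 0.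
Proof.
case: leqP => Hc.
  rewrite (bigD1 (Ordinal (Hc : (c < N.+1)%N))) //= eqxx mul1r big1 ?addr0 // => k Hk.
  by rewrite (_ : (k == c :> nat) = false) ?mul0r //; apply/negbTE; apply: contra Hk => /eqP Hk; apply/eqP/val_inj.
rewrite big1 // => k _; rewrite (_ : (k == c :> nat) = false) ?mul0r //.
by apply/negbTE/eqP => E; have := ltn_ord k; rewrite E; lia.
Qed.

Lemma coefQ k : (1 - 2%:P * 'X^3 + 'X^6 - 4%:P * 'X^9 + 2%:P * 'X^12 : {poly int})`_k =
  (k == 0)%:R - 2 * (k == 3)%:R + (k == 6)%:R - 4 * (k == 9)%:R + 2 * (k == 12)%:R.
Proof. by rewrite !coefD !coefN coef1 !coefCM !coefXn. Qed.

Lemma coefP k : (1 - 'X^3 : {poly int})`_k = (k == 0)%:R - (k == 3)%:R.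
Proof. by rewrite coefD coefN coef1 coefXn. Qed.

Lemma sumQ (g : nat -> int) N :
  \sum_(k < N.+1) (1 - 2%:P * 'X^3 + 'X^6 - 4%:P * 'X^9 + 2%:P * 'X^12 : {poly int})`_k * g k =
  g 0%N - 2 * (if (3 <= N)%N then g 3%N else 0) + (if (6 <= N)%N then g 6%N else 0)
  - 4 * (if (9 <= N)%N then g 9%N else 0) + 2 * (if (12 <= N)%N then g 12%N else 0).
Proof.
have E0 := sum_pick g N 0; rewrite leq0n in E0.
rewrite -E0 -(sum_pick g N 3) -(sum_pick g N 6) -(sum_pick g N 9) -(sum_pick g N 12).
rewrite !mulr_sumr; do 4 rewrite -?sumrB -?big_split /=.
apply: eq_bigr => k _; rewrite coefQ; ring.
Qed.

Lemma e0S q : e0 q.+1 = a (2 * q).+2 - a (2 * q).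
Proof. rewrite /e0 mulnS add2n /= (_ : (match (2 * q)%N with 0%N => 0 | _.+1 => 0 end : int) = 0); last by case: (2 * q)%N. ring. Qed.

Lemma e0_rec p : e0 p.+4.+1 - 2 * e0 p.+4 + e0 p.+3 - 4 * e0 p.+2 + 2 * e0 p.+1 = 0.
Proof.
rewrite !e0S !mulnS !add2n.
set q := (2 * p)%N.
rewrite (aS q.+2) (aS q); ring.
Qed.

Lemma main_arith N :
  let h j := ((T23_9 j)%:R : int) in
  h (N - 0)%N - 2 * (if (3 <= N)%N then h (N - 3)%N else 0) + (if (6 <= N)%N then h (N - 6)%N else 0)
  - 4 * (if (9 <= N)%N then h (N - 9)%N else 0) + 2 * (if (12 <= N)%N then h (N - 12)%N else 0)
  = (N == 0)%:R - (N == 3)%:R.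
Proof.
move=> h; rewrite /h !natz !T_val.
case: (boolP (3 %| N)%N) => H3.
  move/dvdnP: H3 => [m ->].
  case: m => [|[|[|[|[|p]]]]]; try by vm_compute.
  have E1 : forall c, (c <= 4)%N -> (3 * c <= p.+4.+1 * 3)%N = true by move=> c Hc; lia.
  rewrite (E1 1%N) // (E1 2%N) // (E1 3%N) // (E1 4%N) // subn0.
  have E2 : forall c, (c <= 4)%N -> (3 %| p.+4.+1 * 3 - 3 * c)%N = true by move=> c Hc; lia.
  have E3 : forall c, (c <= 4)%N -> ((p.+4.+1 * 3 - 3 * c) %/ 3 = p.+4.+1 - c)%N by move=> c Hc; lia.
  rewrite (E2 1%N) // (E2 2%N) // (E2 3%N) // (E2 4%N) // (E3 1%N) // (E3 2%N) // (E3 3%N) // (E3 4%N) //.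
  rewrite dvdn_mull // mulnK //.
  rewrite (_ : (p.+4.+1 * 3 == 0)%N = false); last by apply/eqP; lia.
  rewrite (_ : (p.+4.+1 * 3 == 3)%N = false); last by apply/eqP; lia.
  rewrite /= !subSS !subn0 !subr0.
  exact: e0_rec.
have Hd : forall c, (c <= N)%N -> (3 %| c)%N -> (3 %| N - c)%N = false.
  by move=> c Hc Hc3; apply/negP => H; move/negP: H3; apply; lia.
have Z : forall c, (3 %| c)%N ->
  (if (c <= N)%N then (if (3 %| N - c)%N then e0 ((N - c) %/ 3) else 0) else 0) = 0.
  by move=> c Hc3; case: leqP => // Hc; rewrite Hd.
rewrite subn0 (negbTE H3) (Z 3%N) // (Z 6%N) // (Z 9%N) // (Z 12%N) //.
rewrite (_ : (N == 0)%N = false); last by apply/eqP => E; move/negP: H3; apply; rewrite E.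
rewrite (_ : (N == 3)%N = false); last by apply/eqP => E; move/negP: H3; apply; rewrite E.
by rewrite !mulr0 !subr0 ?addr0.
Qed.

Theorem mainTheorem12 :
  let P : {poly int} := 1 - 'X^3 in
  let Q : {poly int} := 1 - 2%:P * 'X^3 + 'X^6 - 4%:P * 'X^9 + 2%:P * 'X^12 in
  forall N : nat,
    \sum_(k < N.+1) Q`_k * (T23_9 (N - k))%:R = P`_N.
Proof.
move=> P Q N; rewrite /P /Q.
rewrite (sumQ (fun k => (T23_9 (N - k))%:R) N) coefP.
exact: main_arith.
Qed.
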